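(* As operators on the tensor product of any two finite-dimensional spin representations of $U_q(\mathfrak{su}_2)$, $$Q_2:=1\otimes Q=\mathrm{Tr}_a\big(L^+_{a1}L^+_{a2}L^-_{a2}(L^+_{a1})^{-1}M_a\big),$$ where $Q=(q-q^{-1})^2FE+q^{2H+1}+q^{-2H-1}$.
   Context: $q$ generic complex, $U_q(\mathfrak{su}_2)$ generated by $E,F,q^H$ with $q^HE=qEq^H$, $q^HF=q^{-1}Fq^H$, $[E,F]=(q^{2H}-q^{-2H})/(q-q^{-1})$. An auxiliary space $a\cong\mathbb{C}^2$ (spin $1/2$) is traced over with $\mathrm{Tr}_a$. $L^-$ and $L^+$ are the $2\times2$ matrices with entries in $U_q(\mathfrak{su}_2)$ $$L^-=\begin{pmatrix}q^H&0\\ \frac{q-q^{-1}}{q^{1/2}}E&q^{-H}\end{pmatrix},\qquad L^+=\begin{pmatrix}q^H&\frac{q-q^{-1}}{q^{1/2}}F\\0&q^{-H}\end{pmatrix}$$ (these are the universal $R$-matrix $\mathcal{R}$, resp. $\mathcal{R}_{21}$, with first factor in the spin-$1/2$ representation). $L^\pm_{ai}$ denotes the matrix acting on space $a$ with entries placed in the $i$-th tensor factor; $M_a=\mathrm{diag}(q,q^{-1})$ acting on space $a$. *)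

(* Defs.v *)
From HB Require Import structures.
From mathcomp Require Import all_boot all_order all_algebra.
From mathcomp Require Import mxtens.
Set Implicit Arguments. Unset Strict Implicit. Unset Printing Implicit Defensive.
Import Order.TTheory GRing.Theory Num.Theory.
Local Open Scope ring_scope.

Section SpinReps.
Variable C : fieldType.
(* s plays the role of q^{1/2}; hence q = s^2. *)
Variable s : C.

Definition qnum (z : int) : C :=
  (s ^ (z *+ 2) - s ^ ((- z) *+ 2)) / (s ^+ 2 - s ^- 2).

(* Spin j = n/2 representation on C^(n+1), basis e_0..e_n, e_k having
   H-weight m = k - n/2.  Column-vector convention: A i j is the e_i
   component of A e_j. *)
(* q^H : e_k |-> q^m e_k = s^(2k-n) e_k *)
Definition spinK (n : nat) : 'M[C]_n.+1 :=
  \matrix_(i, j) (if i == j then s ^ ((i : nat)%:Z *+ 2 - n%:Z) else 0).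
Definition spinKinv (n : nat) : 'M[C]_n.+1 :=
  \matrix_(i, j) (if i == j then s ^ (n%:Z - (i : nat)%:Z *+ 2) else 0).
Definition spinE (n : nat) : 'M[C]_n.+1 :=
  \matrix_(i, j) ((i : nat) == (j : nat).+1)%:R.
Definition spinF (n : nat) : 'M[C]_n.+1 :=
  \matrix_(i, j) (if (j : nat) == (i : nat).+1
                  then qnum (j : nat)%:Z * qnum (n.+1 - j)%:Z else 0).

Definition spinQ (n : nat) : 'M[C]_n.+1 :=
  (s ^+ 2 - s ^- 2) ^+ 2 *: (spinF n *m spinE n)
  + s ^+ 2 *: (spinK n *m spinK n) + s ^- 2 *: (spinKinv n *m spinKinv n).

(* Operators on V1 (x) V2 (Kronecker product, V1 the outer factor). *)
Definition on1 (n1 n2 : nat) (A : 'M[C]_n1.+1) : 'M[C]_(n1.+1 * n2.+1) :=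
  A *t (1%:M : 'M[C]_n2.+1).
Definition on2 (n1 n2 : nat) (B : 'M[C]_n2.+1) : 'M[C]_(n1.+1 * n2.+1) :=
  (1%:M : 'M[C]_n1.+1) *t B.

(* Operators on a (x) W with a = C^2 and W of dimension N are 2 x 2 block
   matrices with blocks in End(W). *)
Definition aux_mx (N : nat) (a11 a12 a21 a22 : 'M[C]_N) : 'M[C]_(N + N) :=
  block_mx a11 a12 a21 a22.
Definition Tr_a (N : nat) (X : 'M[C]_(N + N)) : 'M[C]_N :=
  ulsubmx X + drsubmx X.

Definition cL : C := (s ^+ 2 - s ^- 2) / s.

Definition Lplus_a1 (n1 n2 : nat) : 'M[C]_(n1.+1 * n2.+1 + n1.+1 * n2.+1) :=
  aux_mx (on1 n2 (spinK n1)) (cL *: on1 n2 (spinF n1))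
         0 (on1 n2 (spinKinv n1)).
Definition Lplus_a2 (n1 n2 : nat) : 'M[C]_(n1.+1 * n2.+1 + n1.+1 * n2.+1) :=
  aux_mx (on2 n1 (spinK n2)) (cL *: on2 n1 (spinF n2))
         0 (on2 n1 (spinKinv n2)).
Definition Lminus_a2 (n1 n2 : nat) : 'M[C]_(n1.+1 * n2.+1 + n1.+1 * n2.+1) :=
  aux_mx (on2 n1 (spinK n2)) 0
         (cL *: on2 n1 (spinE n2)) (on2 n1 (spinKinv n2)).
Definition M_a (N : nat) : 'M[C]_(N + N) :=
  aux_mx ((s ^+ 2)%:M) 0 0 ((s ^- 2)%:M).

End SpinReps.

(* Main.v *)
Require Import Defs.
From HB Require Import structures.
From mathcomp Require Import all_boot all_order all_algebra.
From mathcomp Require Import mxtens complex.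
From mathcomp Require Import reals.
From mathcomp Require Import ring.
Import Order.TTheory GRing.Theory Num.Theory.
Local Open Scope ring_scope.

Section H.
Variable C : fieldType.

Lemma tensZl m n p q (c : C) (A : 'M[C]_(m,n)) (B : 'M[C]_(p,q)) :
  (c *: A) *t B = c *: (A *t B).
Proof. by apply/matrixP=> i j; rewrite !mxE mulrA. Qed.
Lemma tensZr m n p q (c : C) (A : 'M[C]_(m,n)) (B : 'M[C]_(p,q)) :
  A *t (c *: B) = c *: (A *t B).
Proof. by apply/matrixP=> i j; rewrite !mxE mulrCA. Qed.
Lemma tensDr m n p q (A : 'M[C]_(m,n)) (B B' : 'M[C]_(p,q)) :
  A *t (B + B') = A *t B + A *t B'.
Proof. by apply/matrixP=> i j; rewrite !mxE mulrDr. Qed.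
Lemma tens11 m n : (1%:M : 'M[C]_m.+1) *t (1%:M : 'M[C]_n.+1) = 1%:M.
Proof.
apply/matrixP=> /= i j.
rewrite !mxE /=; symmetry; rewrite -natrM -!val_eqE /=.
rewrite {1}(divn_eq i n.+1) {1}(divn_eq j n.+1).
by rewrite eq_addl_mul ?ltn_mod // xpair_eqE mulnb.
Qed.

Variable s : C.
Hypothesis s0 : s != 0.

Lemma spinK_diag n : spinK s n = diag_mx (\row_i s ^ ((i : nat)%:Z *+ 2 - n%:Z)).
Proof. by apply/matrixP=> i j; rewrite !mxE; case: eqP => // ->; rewrite mulr1n. Qed.
Lemma spinKinv_diag n : spinKinv s n = diag_mx (\row_i s ^ (n%:Z - (i : nat)%:Z *+ 2)).
Proof. by apply/matrixP=> i j; rewrite !mxE; case: eqP => // ->; rewrite mulr1n. Qed.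

Lemma KKinv n : spinK s n *m spinKinv s n = 1%:M.
Proof.
rewrite spinK_diag spinKinv_diag mul_diag_mx; apply/matrixP=> i j; rewrite !mxE.
case: eqP => [->|]; rewrite ?mulr1n ?mulr0n ?mulr0 //.
by rewrite -expfzDr // addrA subrK subrr expr0z.
Qed.
Lemma KinvK n : spinKinv s n *m spinK s n = 1%:M.
Proof.
rewrite spinK_diag spinKinv_diag mul_diag_mx; apply/matrixP=> i j; rewrite !mxE.
case: eqP => [->|]; rewrite ?mulr1n ?mulr0n ?mulr0 //.
by rewrite -expfzDr // addrA subrK subrr expr0z.
Qed.
Lemma KinvF n : spinKinv s n *m spinF s n = s ^+ 2 *: (spinF s n *m spinKinv s n).
Proof.
rewrite spinKinv_diag mul_diag_mx mul_mx_diag; apply/matrixP=> i j; rewrite !mxE.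
case: eqP => [->|_]; last by rewrite !(mulr0,mul0r).
set X := (qnum _ _ * _).
rewrite [RHS]mulrCA [LHS]mulrC; congr (_ * _).
rewrite exprnP -expfzDr //; congr (s ^ _).
rewrite -[i.+1]addn1 PoszD; rewrite !mulr2n; ring.
Qed.

Lemma KKFK n : spinKinv s n *m spinKinv s n *m spinF s n *m spinK s n
  = (s ^+ 2 * s ^+ 2) *: (spinF s n *m spinKinv s n).
Proof.
rewrite -(mulmxA (spinKinv s n)) KinvF -scalemxAr -scalemxAl.
rewrite mulmxA -(mulmxA _ _ (spinK s n)) KinvK mulmx1 KinvF scalerA //.
Qed.

Lemma on1M n1 n2 (A B : 'M[C]_n1.+1) : on1 n2 (A *m B) = on1 n2 A *m on1 n2 B.
Proof. by rewrite /on1 tensmx_mul mulmx1. Qed.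
Lemma on2M n1 n2 (A B : 'M[C]_n2.+1) : on2 n1 (A *m B) = on2 n1 A *m on2 n1 B.
Proof. by rewrite /on2 tensmx_mul mulmx1. Qed.
Lemma on12C n1 n2 (A : 'M[C]_n1.+1) (B : 'M[C]_n2.+1) :
  on1 n2 A *m on2 n1 B = on2 n1 B *m on1 n2 A.
Proof. by rewrite /on1 /on2 !tensmx_mul !mulmx1 !mul1mx. Qed.
Lemma on1Z n1 n2 c (A : 'M[C]_n1.+1) : on1 n2 (c *: A) = c *: on1 n2 A.
Proof. exact: tensZl. Qed.
Lemma on2Z n1 n2 c (A : 'M[C]_n2.+1) : on2 n1 (c *: A) = c *: on2 n1 A.
Proof. exact: tensZr. Qed.
Lemma on2D n1 n2 (A B : 'M[C]_n2.+1) : on2 n1 (A + B) = on2 n1 A + on2 n1 B.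
Proof. exact: tensDr. Qed.
Lemma on1_1 n1 n2 : on1 n2 (1%:M : 'M[C]_n1.+1) = 1%:M.
Proof. exact: tens11. Qed.

Lemma main n1 n2 :
  on2 n1 (spinQ s n2) =
  Tr_a (Lplus_a1 s n1 n2 *m Lplus_a2 s n1 n2 *m Lminus_a2 s n1 n2
        *m invmx (Lplus_a1 s n1 n2) *m M_a s (n1.+1 * n2.+1)).
Proof.
set a := on1 n2 (spinK s n1); set a' := on1 n2 (spinKinv s n1).
set f := on1 n2 (spinF s n1).
set Ainv := block_mx a' (- cL s *: (a' *m f *m a)) 0 a.
have H : Lplus_a1 s n1 n2 *m Ainv = 1%:M.
  rewrite /Lplus_a1 /aux_mx -/a -/a' -/f mulmx_block [1%:M]scalar_mx_block.
  rewrite !mul0mx !mulmx0 !addr0 add0r /a /a' -!on1M KKinv KinvK on1_1.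
  rewrite -scalemxAr -on1M !mulmxA KKinv mul1mx /f -scalemxAl -on1M.
  by rewrite scaleNr addNr.
have ->: invmx (Lplus_a1 s n1 n2) = Ainv.
  have [uA _] := mulmx1_unit H.
  by rewrite -[invmx _]mulmx1 -H mulmxA mulVmx // mul1mx.
rewrite /Lplus_a1 /Lplus_a2 /Lminus_a2 /M_a /aux_mx /Ainv -/a -/a' -/f.
rewrite !mulmx_block /Tr_a block_mxKul block_mxKdr.
rewrite !mul0mx !mulmx0 !addr0 !add0r.
rewrite !mulmxDl ?mulmxDr !mul_mx_scalar.
rewrite -!scalemxAl -!scalemxAr -!scalemxAl.
rewrite /spinQ !on2D !on2Z /a /a' /f /on1 /on2 -!tensZl.
rewrite !tensmx_mul !mulmx1 !mul1mx.
rewrite KKinv KinvK !mul0mx scaler0 scaler0 add0r !mulmxA KKFK.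
rewrite !tensZl !scalerA.
have e1 : s ^+ 2 * (cL s * cL s) = (s ^+ 2 - s ^- 2) ^+ 2.
  by rewrite /cL; field.
have e2 : s ^- 2 * - cL s * cL s * (s ^+ 2 * s ^+ 2) = - (s ^+ 2 * (cL s * cL s)).
  by rewrite /cL; field.
rewrite e2 scaleNr e1.
set X := _ *: (1%:M *t (spinF s n2 *m _)).
set Y := _ *: (1%:M *t (spinK s n2 *m _)).
set Z := _ *: (1%:M *t (spinKinv s n2 *m _)).
set T := _ *: (spinF s n1 *m _ *t _).
by rewrite [RHS]addrA [Y + _]addrA addrK (addrC Y).
Qed.
End H.

Theorem propositionB1 (R : realType) (s : R[i]) (n1 n2 : nat) :
  s != 0 ->
  (forall k : nat, (0 < k)%N -> (s ^+ 2) ^+ k != 1) ->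
  on2 n1 (spinQ s n2) =
  Tr_a (Lplus_a1 s n1 n2 *m Lplus_a2 s n1 n2 *m Lminus_a2 s n1 n2
        *m invmx (Lplus_a1 s n1 n2) *m M_a s (n1.+1 * n2.+1)).
Proof. by move=> s0 _; apply: main. Qed.
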